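(* There is a first-order formula $\varphi_{\mathrm{Bit}}^{R}(x,z)$ over binary relation symbols $<,\lhd$ and unary relation symbols $C,Q$ such that for every $n\in\mathbb{N}$ and all $a,b\in[n]$, $([n],<^n,\lhd^n,C^n,Q^n)\models\varphi_{\mathrm{Bit}}^{R}(a,b)$ iff the $r(b)$-th bit of the binary representation of $a$ is 1.
   Context: $[n]=\{0,1,\dots,n\}$; $<$ is the usual order on $\mathbb{N}$ and $P^n=P\cap[n]^k$ for a $k$-ary relation $P$ on $\mathbb{N}$. Bits are numbered from 0 at the least significant position. Let $q_i=\frac{i(i+1)}{2}$. For $x\in\mathbb{N}$ let $c(x)=\max\{i: q_i\le x\}$, $q(x)=q_{c(x)}$, $r(x)=x-q(x)$. The linear order $\lhd$: $x\lhd y$ iff $r(x)<r(y)$, or $r(x)=r(y)$ and $c(x)<c(y)$. $C=\{x: 2\nmid\lfloor (c(x)+1)/2^{r(x)}\rfloor\}$, $Q=\{x: 2\nmid\lfloor q_{c(x)+1}/2^{r(x)}\rfloor\}$. *)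

(* Defs.v *)
From mathcomp Require Import all_boot.
Set Implicit Arguments. Unset Strict Implicit. Unset Printing Implicit Defensive.

Definition qtri (i : nat) : nat := (i * i.+1) %/ 2.

(* c(x) = max { i : q_i <= x }  (any such i satisfies i <= x). *)
Definition cfun (x : nat) : nat := \max_(i < x.+1 | qtri i <= x) i.
Definition qfun (x : nat) : nat := qtri (cfun x).
Definition rfun (x : nat) : nat := x - qfun x.

Definition lhd (x y : nat) : bool :=
  (rfun x < rfun y) || ((rfun x == rfun y) && (cfun x < cfun y)).

Definition Cset (x : nat) : bool := odd ((cfun x).+1 %/ 2 ^ rfun x).
Definition Qset (x : nat) : bool := odd (qtri (cfun x).+1 %/ 2 ^ rfun x).

Definition bit (a i : nat) : bool := odd (a %/ 2 ^ i).

Inductive form : Type :=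
| FEq  : nat -> nat -> form
| FLt  : nat -> nat -> form
| FLhd : nat -> nat -> form
| FC   : nat -> form
| FQ   : nat -> form
| FNot : form -> form
| FAnd : form -> form -> form
| FOr  : form -> form -> form
| FEx  : nat -> form -> form
| FAll : nat -> form -> form.

Definition upd (e : nat -> nat) (v a : nat) : nat -> nat :=
  fun w => if w == v then a else e w.

(* Satisfaction in the finite structure ([n], <^n, <|^n, C^n, Q^n), with
   universe [n] = {0,...,n}, under the assignment e. *)
Fixpoint sat (n : nat) (e : nat -> nat) (f : form) : Prop :=
  match f with
  | FEq i j => e i = e j
  | FLt i j => e i < e j
  | FLhd i j => lhd (e i) (e j)
  | FC i => Cset (e i)
  | FQ i => Qset (e i)
  | FNot g => ~ sat n e g
  | FAnd g h => sat n e g /\ sat n e h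
  | FOr g h => sat n e g \/ sat n e h
  | FEx v g => exists a, a <= n /\ sat n (upd e v a) g
  | FAll v g => forall a, a <= n -> sat n (upd e v a) g
  end.

(* Main.v *)
Require Import Defs.
From mathcomp Require Import all_boot zify.

Lemma qtriS k : qtri k.+1 = qtri k + k.+1.
Proof.
rewrite /qtri.
have -> : k.+1 * k.+2 = k.+1 * 2 + k * k.+1 by rewrite mulnC; nia.
by rewrite divnMDl // addnC.
Qed.

Lemma qtri_mono a b : a <= b -> qtri a <= qtri b.
Proof.
move=> /subnK <-; elim: (b - a) => [|d IH] //=.
rewrite addSn qtriS; lia.
Qed.

Lemma qtri_lt a b : a < b -> qtri a + a < qtri b.
Proof. move=> /qtri_mono; rewrite qtriS; lia. Qed.

Lemma qtri_ge c : c <= qtri c.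
Proof. elim: c => // c IH; rewrite qtriS; lia. Qed.

Lemma cfun_spec c x : qtri c <= x < qtri c.+1 -> cfun x = c.
Proof.
move=> /andP [H1 H2].
have cx : c < x.+1 by have := qtri_ge c; lia.
apply/eqP; rewrite eqn_leq; apply/andP; split.
  apply/bigmax_leqP => i Hi; case: (leqP i c) => // /qtri_mono; lia.
exact: (@leq_bigmax_cond _ (fun i : 'I_x.+1 => qtri i <= x) (fun i => nat_of_ord i) (Ordinal cx)).
Qed.

Lemma ex_c x : exists c, qtri c <= x < qtri c.+1.
Proof.
elim: x => [|x [c /andP [H1 H2]]]; first by exists 0.
case: (ltnP x.+1 (qtri c.+1)) => H.
  exists c; lia.
exists c.+1; rewrite (qtriS c.+1); lia.
Qed.

Lemma xP x : x = qtri (cfun x) + rfun x /\ rfun x <= cfun x.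
Proof.
have [c Hc] := ex_c x.
rewrite /rfun /qfun (cfun_spec _ _ Hc); move: Hc; rewrite qtriS; lia.
Qed.

Lemma mkC c r : r <= c -> cfun (qtri c + r) = c.
Proof. move=> H; apply: cfun_spec; rewrite qtriS; lia. Qed.
Lemma mkR c r : r <= c -> rfun (qtri c + r) = r.
Proof. move=> H; rewrite /rfun /qfun mkC //; lia. Qed.

Lemma lt_pair x y : (x < y) = (cfun x < cfun y) || ((cfun x == cfun y) && (rfun x < rfun y)).
Proof.
have [Ex Rx] := xP x; have [Ey Ry] := xP y.
move: Ex Ey Rx Ry; set cx := cfun x; set cy := cfun y; set rx := rfun x; set ry := rfun y.
case: (ltngtP cx cy) => H.
- have := qtri_lt _ _ H; lia.
- have := qtri_lt _ _ H; lia.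
- rewrite H; lia.
Qed.

Lemma eq_pair x y : (x == y) = (cfun x == cfun y) && (rfun x == rfun y).
Proof.
have [Ex Rx] := xP x; have [Ey Ry] := xP y.
apply/eqP/andP => [->|[/eqP H1 /eqP H2]]; first by [].
by rewrite Ex Ey H1 H2.
Qed.

Definition carry u v k := 2 ^ k <= u %% 2 ^ k + v %% 2 ^ k.

Lemma modS u k : u %% 2 ^ k.+1 = u %% 2 ^ k + odd (u %/ 2 ^ k) * 2 ^ k.
Proof.
have D0 : 0 < 2 ^ k by rewrite expn_gt0.
have Hm := ltn_pmod u D0.
have E1 := divn_eq u (2 ^ k).
have E2 := odd_double_half (u %/ 2 ^ k).
set U := u %/ 2 ^ k in E1 E2 *; set u' := u %% 2 ^ k in E1 Hm *.
have -> : u = (U./2) * 2 ^ k.+1 + (u' + odd U * 2 ^ k).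
  rewrite expnS; rewrite {1}E1 -{1}E2 -muln2; case: (odd U) => /=; nia.
rewrite modnMDl modn_small // expnS; case: (odd U) => /=; lia.
Qed.

Lemma bit_add u v k : bit (u + v) k = bit u k (+) bit v k (+) carry u v k.
Proof.
have D0 : 0 < 2 ^ k by rewrite expn_gt0.
rewrite /bit /carry.
have -> : u + v = (u %/ 2 ^ k + v %/ 2 ^ k) * 2 ^ k + (u %% 2 ^ k + v %% 2 ^ k).
  by rewrite {1}(divn_eq u (2 ^ k)) {1}(divn_eq v (2 ^ k)); nia.
rewrite divnMDl // !oddD.
have Hu := ltn_pmod u D0; have Hv := ltn_pmod v D0.
have Hs : (u %% 2 ^ k + v %% 2 ^ k) %/ 2 ^ k = (2 ^ k <= u %% 2 ^ k + v %% 2 ^ k).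
  case: leqP => H.
    have -> : (u %% 2 ^ k + v %% 2 ^ k) = 1 * 2 ^ k + (u %% 2 ^ k + v %% 2 ^ k - 2 ^ k) by lia.
    rewrite divnMDl // divn_small //; lia.
  by rewrite divn_small.
rewrite Hs; by case: (odd _); case: (odd _); case: (_ <= _).
Qed.

Lemma carry0 u v : carry u v 0 = false.
Proof. by rewrite /carry expn0 !modn1. Qed.

Lemma carryS u v k : carry u v k.+1 = (bit u k && bit v k) || ((bit u k || bit v k) && carry u v k).
Proof.
rewrite /carry /bit !modS expnS.
have D0 : 0 < 2 ^ k by rewrite expn_gt0.
have Hu := ltn_pmod u D0; have Hv := ltn_pmod v D0.
case: (odd (u %/ 2 ^ k)); case: (odd (v %/ 2 ^ k)) => /=; lia.
Qed.

Lemma carry_look u v k : carry u v k <->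
  exists j, j < k /\ bit u j /\ bit v j /\ forall l, j < l -> l < k -> bit u l || bit v l.
Proof.
elim: k => [|k IH]; first by rewrite carry0; split => // [[j [] ]].
rewrite carryS; split.
  case/orP => [/andP [H1 H2]|/andP [H1 /IH [j [Hj [H3 [H4 H5]]]]]].
    exists k; split => //; split => //; split => // l; lia.
  exists j; do 3 (split; first by (try lia)).
  move=> l H6 H7; case: (ltnP l k) => H8; first exact: H5.
  by have -> : l = k by lia.
move=> [j [Hj [H3 [H4 H5]]]].
case: (ltnP j k) => H6; last first.
  have E : j = k by lia.
  subst j; by rewrite H3 H4.
apply/orP; right; rewrite H5 //=.
apply/IH; exists j; do 3 (split => //); move=> l H7 H8; apply: H5; lia.
Qed.

Lemma bit_small u j : u < 2 ^ j -> bit u j = false.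
Proof. by move=> H; rewrite /bit divn_small. Qed.

Lemma qtri_pow c : qtri c < 2 ^ c.
Proof.
elim: c => // c IH; rewrite qtriS expnS.
have := ltn_expl c (isT : 1 < 2); lia.
Qed.

Lemma bit_qtri c j : c <= j -> bit (qtri c) j = false.
Proof.
move=> H; apply: bit_small; apply: (leq_trans (qtri_pow c)).
by rewrite leq_exp2l.
Qed.

Lemma bit_self v j : v <= j -> bit v j = false.
Proof.
move=> H; apply: bit_small; apply: (leq_trans (ltn_expl v (isT : 1 < 2))).
by rewrite leq_exp2l.
Qed.

Ltac updsimp := rewrite /upd /=; repeat match goal with |- context[?x == ?y] => (have -> : (x == y) = false by apply/eqP; lia) end.

Definition FImp A B := FOr (FNot A) B.
Definition FLe i j := FOr (FLt i j) (FEq i j).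

Definition One i := FEx 103 (FAnd (FLt 103 i) (FAll 104 (FImp (FLt 104 i) (FEq 104 103)))).

Lemma sat_One n e i : i < 100 -> e i <= n -> sat n e (One i) <-> e i = 1.
Proof.
move=> Hi Hn; rewrite /One /FImp /=; updsimp; split.
  move=> [a [Ha [H1 H2]]].
  have := H2 0; have := H2 (e i).-1; lia.
move=> ->; exists 0; split => //; split => // b Hb; lia.
Qed.

Definition diag x := rfun x == cfun x.

Definition Diag i := FAnd (FNot (One i)) (FNot (FEx 100 (FAnd (FLhd 100 i)
   (FAnd (FNot (FEx 101 (FAnd (FLhd 100 101) (FLhd 101 i)))) (FEx 102 (FAnd (FLt 100 102) (FLt 102 i))))))).

Lemma qtri1 : qtri 1 = 1. Proof. by []. Qed.
Lemma qtri0 : qtri 0 = 0. Proof. by []. Qed.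

Opaque One.
Lemma sat_Diag n e i : i < 100 -> e i <= n -> sat n e (Diag i) <-> diag (e i).
Proof.
move=> Hi Hn; rewrite /Diag /=; updsimp.
rewrite sat_One //; rewrite /diag /lhd.
move: (e i) Hn => d Hn.
have [Ed Rd] := xP d.
split.
  move=> [H1 H2]; apply/eqP.
  case: (ltnP (rfun d) (cfun d)) => Hlt; last by lia.
  case: (leqP (cfun d) 1) => Hc.
    have E : cfun d = 1 by lia.
    by exfalso; apply: H1; rewrite Ed E qtri1; lia.
  exfalso; apply: H2.
  set p := qtri (cfun d).-1 + rfun d.
  have Cp : cfun p = (cfun d).-1 by rewrite mkC //; lia.
  have Rp : rfun p = rfun d by rewrite mkR //; lia.
  have Lpd := lt_pair p d.
  exists p; split; first by lia.
  rewrite Cp Rp; split; first by lia.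
  split.
    move=> [u [Hu]]; have := xP u; lia.
  case: (ltnP (rfun d) (cfun d).-1) => H3.
    set w := qtri (cfun d).-1 + (cfun d).-1.
    have Cw : cfun w = (cfun d).-1 by rewrite mkC //; lia.
    have Rw : rfun w = (cfun d).-1 by rewrite mkR //; lia.
    have L1 := lt_pair p w; have L2 := lt_pair w d.
    exists w; lia.
  set w := qtri (cfun d) + 0.
  have Cw : cfun w = (cfun d) by rewrite mkC //; lia.
  have Rw : rfun w = 0 by rewrite mkR //; lia.
  have L1 := lt_pair p w; have L2 := lt_pair w d.
  exists w; lia.
move/eqP=> H; split.
  move=> E; rewrite E in H Ed.
  have C1 : cfun 1 = 1 by rewrite -{1}qtri1 -(addn0 (qtri 1)) mkC.
  have R1 : rfun 1 = 0 by rewrite -{1}qtri1 -(addn0 (qtri 1)) mkR.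
  lia.
move=> [p [Hp [Lpd [Hnu [w [Hw [Hpw Hwd]]]]]]].
have [Ep Rp] := xP p; have [Ew Rw] := xP w.
have L1 := lt_pair p w; have L2 := lt_pair w d.
apply: Hnu.
set u := qtri (cfun d) + (rfun d).-1.
have Cu : cfun u = cfun d by rewrite mkC //; lia.
have Ru : rfun u = (rfun d).-1 by rewrite mkR //; lia.
have Lud := lt_pair u d.
exists u; rewrite Cu Ru; lia.
Qed.
Opaque Diag.

Definition NDB x y := FNot (FEx 90 (FAnd (Diag 90) (FAnd (FLhd x 90) (FOr (FLhd 90 y) (FEq 90 y))))).
Definition SameR i j := FOr (FEq i j) (FOr (FAnd (FLhd i j) (NDB i j)) (FAnd (FLhd j i) (NDB j i))).

Lemma NDB_sem n e x y : x < 90 -> y < 90 -> e y <= n -> lhd (e x) (e y) ->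
  sat n e (NDB x y) <-> rfun (e x) = rfun (e y).
Proof.
move=> Hx Hy Hn; rewrite /NDB /=; updsimp.
move: (e x) (e y) Hn => a b Hn; rewrite /lhd => Hab.
have [Ea Ra] := xP a; have [Eb Rb] := xP b.
split.
  move=> H; case: (ltnP (rfun a) (rfun b)) => H1; last by lia.
  exfalso; apply: H.
  set d := qtri (rfun b) + rfun b.
  have Cd : cfun d = rfun b by rewrite mkC.
  have Rd : rfun d = rfun b by rewrite mkR.
  have Ldb := lt_pair d b.
  have Hdb : d <= b by rewrite leq_eqVlt eq_pair Ldb Cd Rd; lia.
  exists d; split; first exact: leq_trans Hdb Hn.
  split; first by apply/(sat_Diag n (upd e 90 d) 90 isT); [exact: leq_trans Hdb Hn|]; rewrite /= /diag Cd Rd.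
  rewrite Cd Rd /=; split; first by lia.
  case: (ltnP (rfun b) (cfun b)) => H2; first by lia.
  by right; apply/eqP; rewrite eq_pair Cd Rd; lia.
move=> H [d [Hd [/(sat_Diag n (upd e 90 d) 90 isT Hd) /= /eqP Dd [H1 H2]]]].
rewrite /upd /= in Dd; have [Ed Rd] := xP d.
case: H2 => [H2|H2]; first by lia.
subst d; lia.
Qed.
Opaque NDB.

Lemma sat_SameR n e i j : i < 90 -> j < 90 -> e i <= n -> e j <= n ->
  sat n e (SameR i j) <-> rfun (e i) = rfun (e j).
Proof.
move=> Hi Hj Hin Hjn; rewrite /SameR /=.
split.
  case=> [->//|[[H1 /NDB_sem H2]|[H1 /NDB_sem H2]]].
    exact: H2.
  by symmetry; apply: H2.
move=> H.
case: (ltngtP (cfun (e i)) (cfun (e j))) => Hc.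
- right; left; have L : lhd (e i) (e j) by rewrite /lhd H Hc eqxx orbT.
  by split => //; apply/NDB_sem.
- right; right; have L : lhd (e j) (e i) by rewrite /lhd H Hc eqxx orbT.
  by split => //; apply/NDB_sem.
- by left; apply/eqP; rewrite eq_pair H Hc !eqxx.
Qed.
Opaque SameR.

Definition LtR i j := FAnd (FLhd i j) (FNot (SameR i j)).

Lemma sat_LtR n e i j : i < 90 -> j < 90 -> e i <= n -> e j <= n ->
  sat n e (LtR i j) <-> rfun (e i) < rfun (e j).
Proof.
move=> Hi Hj Hin Hjn; rewrite /LtR /= sat_SameR // /lhd; lia.
Qed.
Opaque LtR.

Definition PB x y := FAnd (FLt x y) (FEx 80 (FAnd (Diag 80) (FAnd (FLe x 80) (FAnd (FLt 80 y)
  (FAll 81 (FImp (FAnd (Diag 81) (FAnd (FLe x 81) (FLt 81 y))) (FEq 81 80))))))).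

Lemma diag_mk c : diag (qtri c + c).
Proof. by rewrite /diag mkC // mkR. Qed.

Lemma sat_PB n e x y : x < 80 -> y < 80 -> e x <= n -> e y <= n ->
  sat n e (PB x y) <-> (cfun (e x)).+1 = cfun (e y).
Proof.
move=> Hx Hy Hxn Hyn; rewrite /PB /FImp /FLe /=; updsimp.
move: (e x) (e y) Hxn Hyn => a b Ha Hb.
have Ra := (xP a).2; have Rb := (xP b).2.
split.
  move=> [Lab [d [Hd [/(sat_Diag n (upd e 80 d) 80 isT Hd) Dd [Ld1 [Ld2 U]]]]]].
  rewrite /upd /= /diag in Dd; move/eqP: Dd => Dd.
  have Rd := (xP d).2.
  have K1 : cfun a <= cfun d.
    case: Ld1 => [|->//]; rewrite lt_pair; clear -Dd; lia.
  have K2 : cfun d < cfun b by move: Ld2; rewrite lt_pair; clear -Dd Rb; lia.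
  case: (ltnP (cfun a).+1 (cfun b)) => K3; last by clear -K1 K2 K3; lia.
  exfalso.
  set d1 := qtri (cfun a) + cfun a; set d2 := qtri (cfun a).+1 + (cfun a).+1.
  have C1 : cfun d1 = cfun a by rewrite mkC.
  have R1 : rfun d1 = cfun a by rewrite mkR.
  have C2 : cfun d2 = (cfun a).+1 by rewrite mkC.
  have R2 : rfun d2 = (cfun a).+1 by rewrite mkR.
  have M2 : d1 < b by rewrite lt_pair C1 R1; clear -K3; lia.
  have M4 : d2 < b by rewrite lt_pair C2 R2; clear -K3; lia.
  have M1 : a <= d1 by rewrite leq_eqVlt eq_pair lt_pair C1 R1; clear -Ra; lia.
  have M3 : a < d2 by rewrite lt_pair C2 R2; clear; lia.
  have B1 : d1 <= n by apply: leq_trans Hb; clear -M2; lia.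
  have B2 : d2 <= n by apply: leq_trans Hb; clear -M4; lia.
  have U1 := U d1 B1; have U2 := U d2 B2.
  have Dg1 : sat n (upd (upd e 80 d) 81 d1) (Diag 81) by apply/(sat_Diag _ _ 81 isT B1); apply: diag_mk.
  have Dg2 : sat n (upd (upd e 80 d) 81 d2) (Diag 81) by apply/(sat_Diag _ _ 81 isT B2); apply: diag_mk.
  rewrite /upd /= in U1 U2.
  case: U1 => [U1|U1]; first by apply: U1; split => //; split => //; clear -M1; lia.
  case: U2 => [U2|U2]; first by apply: U2; split => //; split => //; clear -M3; lia.
  have : cfun d1 = cfun d2 by rewrite U1 U2.
  rewrite C1 C2; clear; lia.
move=> H.
split; first by rewrite lt_pair -H; clear; lia.
set d := qtri (cfun a) + cfun a.
have Cd : cfun d = cfun a by rewrite mkC.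
have Rd : rfun d = cfun a by rewrite mkR.
have L1 : a <= d by rewrite leq_eqVlt eq_pair lt_pair Cd Rd; clear -Ra; lia.
have L2 : d < b by rewrite lt_pair Cd Rd -H; clear; lia.
have Bd : d <= n by apply: leq_trans Hb; clear -L2; lia.
exists d; split => //; split; first by apply/(sat_Diag n (upd e 80 d) 80 isT Bd); apply: diag_mk.
split; first by clear -L1; lia.
split => //.
move=> d' Hd'; rewrite /upd /=.
case: (boolP (diag d')) => Dg; last first.
  by left => -[/(sat_Diag n (upd (upd e 80 d) 81 d') 81 isT Hd') /= H1 _]; rewrite /upd /= (negbTE Dg) in H1.
rewrite /diag in Dg; move/eqP: Dg => Dg.
case: (ltnP (cfun d') (cfun a)) => K.
  left => -[_ [K2 _]].
  have : a <= d' by clear -K2; lia.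
  rewrite leq_eqVlt eq_pair lt_pair; clear -K Dg; lia.
case: (ltnP (cfun a) (cfun d')) => K'.
  left => -[_ [_ K2]]; move: K2; rewrite lt_pair -H; have := (xP d').2; clear -K' Dg Rb H; lia.
right; apply/eqP; rewrite eq_pair Cd Rd; clear -K K' Dg; lia.
Qed.
Opaque PB.
Opaque One Diag NDB SameR LtR PB.

Ltac side := rewrite /upd /=; updsimp; (done || lia).

Definition PBR x a := FEx 70 (FAnd (Diag 70) (FAnd (SameR 70 a) (PB x 70))).

Lemma sat_PBR n e x a : x < 70 -> a < 70 -> e x <= n -> e a <= n ->
  sat n e (PBR x a) <-> (cfun (e x)).+1 = rfun (e a).
Proof.
move=> Hx Ha Hxn Han; rewrite /PBR /=.
split.
  move=> [y [Hy [Dy [Sy Py]]]].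
  rewrite sat_Diag in Dy; [ | by side ..].
  rewrite sat_SameR in Sy; [ | by side ..].
  rewrite sat_PB in Py; [ | by side ..].
  move: Dy Sy Py; rewrite /upd /=; updsimp; rewrite /diag => /eqP Dy Sy Py.
  lia.
move=> H.
set y := qtri (rfun (e a)) + rfun (e a).
have Cy : cfun y = rfun (e a) by rewrite mkC.
have Ry : rfun y = rfun (e a) by rewrite mkR.
have Hy : y <= e a.
  rewrite leq_eqVlt eq_pair lt_pair Cy Ry; have := (xP (e a)).2; clear; lia.
have Hyn : y <= n by apply: leq_trans Han.
exists y; split => //.
rewrite sat_Diag; [ | by side ..].
rewrite sat_SameR; [ | by side ..].
rewrite sat_PB; [ | by side ..].
rewrite /upd /=; updsimp; rewrite /diag Cy Ry; split => //.
Qed.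
Opaque PBR.

Definition U p := FEx 60 (FAnd (PB 60 0) (FAnd (SameR 60 p) (FQ 60))).

Lemma sat_U n e p : p < 60 -> e 0 <= n -> e p <= n ->
  sat n e (U p) <-> bit (qtri (cfun (e 0))) (rfun (e p)).
Proof.
move=> Hp H0 Hpn; rewrite /U /=.
split.
  move=> [y [Hy [Py [Sy Qy]]]].
  rewrite sat_PB in Py; [ | by side ..].
  rewrite sat_SameR in Sy; [ | by side ..].
  move: Py Sy Qy; rewrite /upd /=; updsimp => Py Sy.
  by rewrite /Qset Py Sy.
move=> Hb.
have Hlt : rfun (e p) < cfun (e 0).
  case: (ltnP (rfun (e p)) (cfun (e 0))) => // H; by rewrite bit_qtri in Hb.
set y := qtri (cfun (e 0)).-1 + rfun (e p).
have Cy : cfun y = (cfun (e 0)).-1 by rewrite mkC //; lia.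
have Ry : rfun y = rfun (e p) by rewrite mkR //; lia.
have Hy : y < e 0 by rewrite lt_pair Cy Ry; clear -Hlt; lia.
have Hyn : y <= n by apply: leq_trans H0; lia.
exists y; split => //.
rewrite sat_PB; [ | by side ..].
rewrite sat_SameR; [ | by side ..].
rewrite /upd /=; updsimp; rewrite Cy Ry; split; first by lia.
split => //.
rewrite /Qset Cy Ry.
by have -> : (cfun (e 0)).-1.+1 = cfun (e 0) by lia.
Qed.
Opaque U.

Definition V p := FEx 50 (FAnd (PBR 50 0) (FAnd (SameR 50 p) (FC 50))).

Lemma sat_V n e p : p < 50 -> e 0 <= n -> e p <= n ->
  sat n e (V p) <-> bit (rfun (e 0)) (rfun (e p)).
Proof.
move=> Hp H0 Hpn; rewrite /V /=.
split.
  move=> [y [Hy [Py [Sy Qy]]]].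
  rewrite sat_PBR in Py; [ | by side ..].
  rewrite sat_SameR in Sy; [ | by side ..].
  move: Py Sy Qy; rewrite /upd /=; updsimp => Py Sy.
  by rewrite /Cset Py Sy.
move=> Hb.
have Hlt : rfun (e p) < rfun (e 0).
  case: (ltnP (rfun (e p)) (rfun (e 0))) => // H; by rewrite bit_self in Hb.
have R0 := (xP (e 0)).2.
set y := qtri (rfun (e 0)).-1 + rfun (e p).
have Cy : cfun y = (rfun (e 0)).-1 by rewrite mkC //; lia.
have Ry : rfun y = rfun (e p) by rewrite mkR //; lia.
have Hy : y < e 0 by rewrite lt_pair Cy Ry; clear -Hlt R0; lia.
have Hyn : y <= n by apply: leq_trans H0; lia.
exists y; split => //.
rewrite sat_PBR; [ | by side ..].
rewrite sat_SameR; [ | by side ..].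
rewrite /upd /=; updsimp; rewrite Cy Ry; split; first by lia.
split => //.
rewrite /Cset Cy Ry.
by have -> : (rfun (e 0)).-1.+1 = rfun (e 0) by lia.
Qed.
Opaque V.

Definition Carry := FEx 40 (FAnd (LtR 40 1) (FAnd (U 40) (FAnd (V 40)
  (FAll 41 (FImp (FAnd (LtR 40 41) (LtR 41 1)) (FOr (U 41) (V 41))))))).

Lemma sat_Carry n e : e 0 <= n -> e 1 <= n ->
  sat n e Carry <-> carry (qtri (cfun (e 0))) (rfun (e 0)) (rfun (e 1)).
Proof.
move=> H0 H1; rewrite carry_look /Carry /FImp /=.
have R1 := (xP (e 1)).2.
split.
  move=> [j [Hj [Lj [Uj [Vj A]]]]].
  rewrite sat_LtR in Lj; [ | by side ..].
  rewrite sat_U in Uj; [ | by side ..].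
  rewrite sat_V in Vj; [ | by side ..].
  move: Lj Uj Vj; rewrite /upd /= => Lj Uj Vj.
  exists (rfun j); do 3 (split => //).
  move=> l' Hl1 Hl2.
  set l := qtri (cfun (e 1)) + l'.
  have Cl : cfun l = cfun (e 1) by rewrite mkC //; lia.
  have Rl : rfun l = l' by rewrite mkR //; lia.
  have Hl : l <= e 1 by rewrite leq_eqVlt eq_pair lt_pair Cl Rl; clear -Hl2; lia.
  have Hln : l <= n by apply: leq_trans H1.
  case: (A l Hln) => [B|B].
    exfalso; apply: B.
    rewrite sat_LtR; [ | by side ..].
    rewrite sat_LtR; [ | by side ..].
    rewrite /upd /= Rl; lia.
  case: B => B.
    rewrite sat_U in B; [ | by side ..].
    by move: B; rewrite /upd /= Rl => ->.
  rewrite sat_V in B; [ | by side ..].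
  by move: B; rewrite /upd /= Rl => ->; rewrite orbT.
move=> [j' [Hj1 [Uj [Vj A]]]].
set j := qtri (cfun (e 1)) + j'.
have Cj : cfun j = cfun (e 1) by rewrite mkC //; lia.
have Rj : rfun j = j' by rewrite mkR //; lia.
have Hj : j <= e 1 by rewrite leq_eqVlt eq_pair lt_pair Cj Rj; clear -Hj1; lia.
have Hjn : j <= n by apply: leq_trans H1.
exists j; split => //.
rewrite sat_LtR; [ | by side ..].
rewrite sat_U; [ | by side ..].
rewrite sat_V; [ | by side ..].
rewrite /upd /= Rj; do 3 (split => //).
move=> l Hl.
rewrite sat_LtR; [ | by side ..].
rewrite sat_LtR; [ | by side ..].
rewrite sat_U; [ | by side ..].
rewrite sat_V; [ | by side ..].
rewrite /upd /= Rj.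
case: (boolP ((j' < rfun l) && (rfun l < rfun (e 1)))) => /andP.
  move=> [K1 K2]; right; move: (A _ K1 K2) => /orP [->|->]; by [left|right].
by move=> K; left => -[K1 K2]; apply: K.
Qed.
Opaque Carry.

Definition Xor A B := FOr (FAnd A (FNot B)) (FAnd (FNot A) B).

Lemma sat_Xor n e A B (P Q : bool) : (sat n e A <-> P) -> (sat n e B <-> Q) ->
  sat n e (Xor A B) <-> P (+) Q.
Proof. move=> HA HB; rewrite /Xor /=; case: P HA; case: Q HB => /= HB HA; intuition. Qed.

Definition Phi := Xor (Xor (U 1) (V 1)) Carry.

Theorem lemma3p5 :
  exists phi : form,
    forall (n a b : nat), a <= n -> b <= n ->
    forall e : nat -> nat, (forall i, e i <= n) -> e 0 = a -> e 1 = b ->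
      (sat n e phi <-> bit a (rfun b)).
Proof.
exists Phi => n a b Ha Hb e He E0 E1.
rewrite /Phi.
have H0 : e 0 <= n by rewrite E0.
have H1 : e 1 <= n by rewrite E1.
rewrite (sat_Xor _ _ _ _ _ _ (sat_Xor _ _ _ _ _ _ (sat_U n e 1 isT H0 H1) (sat_V n e 1 isT H0 H1)) (sat_Carry n e H0 H1)).
have Ea := (xP (e 0)).1.
rewrite -E0 -E1.
have := bit_add (qtri (cfun (e 0))) (rfun (e 0)) (rfun (e 1)); rewrite -Ea => ->.
by [].
Qed.
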